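(* There are absolute constants $\kappa_0\ge1$ and $c>0$ such that the following holds for every $\epsilon\in(0,1/4)$. Any quantum query algorithm which, given unitaries $\mathcal O_\rho,\mathcal O_\sigma$ preparing purifications of arbitrary mixed states $\rho,\sigma$ satisfying $\rho\ge I/\kappa_0$ and $\sigma\ge I/\kappa_0$, outputs an estimate of $F(\rho,\sigma)$ within additive error $\epsilon$ with probability at least $2/3$, must make at least $c/\epsilon$ queries to $\mathcal O_\rho,\mathcal O_\sigma$ on some such input. In other words, fidelity estimation to additive error $\epsilon$ requires $\Omega(1/\epsilon)$ queries even when $\kappa_\rho=\kappa_\sigma=\Theta(1)$.
   Context: The (Uhlmann) fidelity is $F(\rho,\sigma):=\operatorname{Tr}\big((\sigma^{1/2}\rho\sigma^{1/2})^{1/2}\big)$. A unitary $\mathcal O_\rho$ on $n+a$ qubits prepares a purification of $\rho$ if $\operatorname{Tr}_a(\mathcal O_\rho|0\rangle\langle0|\mathcal O_\rho^\dagger)=\rho$. A query means one use of any of $\mathcal O$, $\mathcal O^\dagger$, controlled-$\mathcal O$, controlled-$\mathcal O^\dagger$. Inequalities are in the Loewner order. *)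

(* Defs.v *)
From HB Require Import structures.
From mathcomp Require Import all_boot all_order all_algebra.
From mathcomp Require Import complex mxtens.
From mathcomp Require Import boolp classical_sets reals.
Set Implicit Arguments. Unset Strict Implicit. Unset Printing Implicit Defensive.
Import Order.TTheory GRing.Theory Num.Theory.
Local Open Scope ring_scope.
Local Open Scope complex_scope.

Section Quantum.
Variable R : realType.
Local Notation C := R[i].

Definition adj {m n} (A : 'M[C]_(m, n)) : 'M[C]_(n, m) := (map_mx (@conjc R) A)^T.

Definition unitary {n} (U : 'M[C]_n) : Prop := U *m adj U = 1%:M.

(* positive semidefinite: <v, A v> >= 0 for every complex vector v
   (in the order of C, 0 <= z means z is real and nonnegative) *)
Definition psd {n} (A : 'M[C]_n) : Prop :=
  forall v : 'cV[C]_n, 0 <= (adj v *m A *m v) ord0 ord0.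

Definition loewner_le {n} (A B : 'M[C]_n) : Prop := psd (B - A).

Definition msqrt {n} (A : 'M[C]_n) : 'M[C]_n :=
  xget 0 [set B | psd B /\ B *m B = A].

Definition fidelity {n} (rho sigma : 'M[C]_n) : C :=
  \tr (msqrt (msqrt sigma *m rho *m msqrt sigma)).

Definition ket0 {d} : 'cV[C]_d := \col_i ((nat_of_ord i == 0)%N)%:R.

(* partial trace over the second tensor factor of a pure state psi on
   C^m (x) C^k (index (i,j) |-> i*k + j, matching tensmx) *)
Definition ptrace_pure {m k} (psi : 'cV[C]_(m * k)) : 'M[C]_m :=
  \matrix_(i, j) \sum_(l < k)
     psi (mxtens_index (i, l)) ord0 * conjc (psi (mxtens_index (j, l)) ord0).

Definition prepared_state {n a} (O : 'M[C]_(2 ^ n * 2 ^ a)) : 'M[C]_(2 ^ n) :=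
  ptrace_pure (O *m ket0).

Definition admissible {n a} (kappa0 : R) (O : 'M[C]_(2 ^ n * 2 ^ a)) : Prop :=
  unitary O /\ loewner_le ((kappa0^-1)%:C%:M) (prepared_state O).

(* Workspace: C^2 (control qubit) (x) C^D (oracle register, D = 2^(n+a))
   (x) C^W (remaining workspace). *)
Definition query_op {D W} (Orho Osig : 'M[C]_D) (q : bool * bool * bool)
  : 'M[C]_(2 * D * W) :=
  let: (which, dag, ctrl) := q in
  let O0 := if which then Osig else Orho in
  let O := if dag then adj O0 else O0 in
  let P0 : 'M[C]_2 := delta_mx ord0 ord0 in
  let P1 : 'M[C]_2 := delta_mx ord_max ord_max in
  let G : 'M[C]_(2 * D) :=
    if ctrl then P0 *t (1%:M : 'M[C]_D) + P1 *t O
    else (1%:M : 'M[C]_2) *t O in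
  G *t (1%:M : 'M[C]_W).

Fixpoint alg_state {D W} (U : nat -> 'M[C]_(2 * D * W))
  (q : nat -> bool * bool * bool) (Orho Osig : 'M[C]_D) (k : nat)
  : 'cV[C]_(2 * D * W) :=
  match k with
  | 0 => U 0%N *m ket0
  | k'.+1 => U k *m (query_op Orho Osig (q k') *m alg_state U q Orho Osig k')
  end.

Definition success_prob {D W} (T : nat) (U : nat -> 'M[C]_(2 * D * W))
  (q : nat -> bool * bool * bool) (est : 'I_(2 * D * W) -> R)
  (Orho Osig : 'M[C]_D) (f : C) (eps : R) : C :=
  \sum_(k < 2 * D * W | `|(est k)%:C - f| <= eps%:C)
     `|alg_state U q Orho Osig T k ord0| ^+ 2.

End Quantum.

(* Main.v *)
Require Import Defs.
From HB Require Import structures.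
From mathcomp Require Import all_boot all_order all_algebra.
From mathcomp Require Import complex mxtens perm.
From mathcomp Require Import boolp classical_sets reals.
From mathcomp Require Import ring lra.
Set Implicit Arguments. Unset Strict Implicit. Unset Printing Implicit Defensive.
Import Order.TTheory GRing.Theory Num.Theory.
Local Open Scope ring_scope.
Local Open Scope complex_scope.

Section A.
Variable R : realType.
Local Notation C := R[i].

Lemma adjmM m n p (A : 'M[C]_(m,n)) (B : 'M[C]_(n,p)) : adj (A *m B) = adj B *m adj A.
Proof. by rewrite /adj map_mxM trmx_mul. Qed.

Lemma adjmK m n (A : 'M[C]_(m,n)) : adj (adj A) = A.
Proof. by apply/matrixP => i j; rewrite !mxE conjcK. Qed.

Lemma adjmD m n (A B : 'M[C]_(m,n)) : adj (A + B) = adj A + adj B.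
Proof. by apply/matrixP => i j; rewrite !mxE rmorphD. Qed.

Lemma adjmB m n (A B : 'M[C]_(m,n)) : adj (A - B) = adj A - adj B.
Proof. by apply/matrixP => i j; rewrite !mxE rmorphB. Qed.

Lemma adjmZ m n (a : C) (A : 'M[C]_(m,n)) : adj (a *: A) = (a^*)%C *: adj A.
Proof. by apply/matrixP => i j; rewrite !mxE rmorphM. Qed.

Lemma adjm_scalar n (a : C) : adj (a%:M : 'M[C]_n) = (a^*)%C%:M.
Proof. by apply/matrixP => i j; rewrite !mxE rmorphMn eq_sym. Qed.

Lemma adjm1 n : adj (1%:M : 'M[C]_n) = 1%:M.
Proof. by rewrite adjm_scalar conjc1. Qed.

Lemma adjmT m n p q (A : 'M[C]_(m,n)) (B : 'M[C]_(p,q)) : adj (A *t B) = adj A *t adj B.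
Proof. by rewrite /adj map_mxT trmx_tens. Qed.

Lemma tensmxDl m n p q (A A' : 'M[C]_(m,n)) (B : 'M[C]_(p,q)) :
  (A + A') *t B = A *t B + A' *t B.
Proof. by apply/matrixP => i j; rewrite !mxE mulrDl. Qed.

Lemma tensmxDr m n p q (A : 'M[C]_(m,n)) (B B' : 'M[C]_(p,q)) :
  A *t (B + B') = A *t B + A *t B'.
Proof. by apply/matrixP => i j; rewrite !mxE mulrDr. Qed.

Lemma tensmxBl m n p q (A A' : 'M[C]_(m,n)) (B : 'M[C]_(p,q)) :
  (A - A') *t B = A *t B - A' *t B.
Proof. by apply/matrixP => i j; rewrite !mxE mulrBl. Qed.

Lemma tensmxBr m n p q (A : 'M[C]_(m,n)) (B B' : 'M[C]_(p,q)) :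
  A *t (B - B') = A *t B - A *t B'.
Proof. by apply/matrixP => i j; rewrite !mxE mulrBr. Qed.

Lemma tensmxZr m n p q (A : 'M[C]_(m,n)) (a : C) (B : 'M[C]_(p,q)) :
  A *t (a *: B) = a *: (A *t B).
Proof. by apply/matrixP => i j; rewrite !mxE mulrCA. Qed.

Lemma tensmxZl m n p q (A : 'M[C]_(m,n)) (a : C) (B : 'M[C]_(p,q)) :
  (a *: A) *t B = a *: (A *t B).
Proof. by apply/matrixP => i j; rewrite !mxE mulrA. Qed.

Lemma tensmx11 m n : (1%:M : 'M[C]_m) *t (1%:M : 'M[C]_n) = 1%:M.
Proof.
apply/matrixP => i j.
case: (mxtens_indexP i) => i0 i1; case: (mxtens_indexP j) => j0 j1.
rewrite tensmxE !mxE -natrM mulnb.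
by rewrite (inj_eq (can_inj (@mxtens_indexK _ _))) xpair_eqE.
Qed.

Lemma tensmx_scalar_r m n p (A : 'M[C]_(m,n)) (a : C) :
  A *t (a%:M : 'M[C]_p) = a *: (A *t 1%:M).
Proof. by rewrite -tensmxZr scalemx1. Qed.

End A.

Section B.
Variable R : realType.
Local Notation C := R[i].

Definition n2 {N} (v : 'cV[C]_N) : R := \sum_i ((complex.Re (v i 0))^+2 + (complex.Im (v i 0))^+2).
Definition ip {N} (u v : 'cV[C]_N) : C := (adj u *m v) 0 0.
Definition rip {N} (u v : 'cV[C]_N) : R := \sum_i (complex.Re (u i 0) * complex.Re (v i 0) + complex.Im (u i 0) * complex.Im (v i 0)).
Definition nrm {N} (v : 'cV[C]_N) : R := Num.sqrt (n2 v).

Lemma n2_ge0 N (v : 'cV[C]_N) : 0 <= n2 v.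
Proof. by apply: sumr_ge0 => i _; rewrite addr_ge0 // sqr_ge0. Qed.

Lemma ip_self N (v : 'cV[C]_N) : ip v v = (n2 v)%:C.
Proof.
rewrite /ip mxE /n2 rmorph_sum; apply: eq_bigr => i _; rewrite !mxE.
case: (v i 0) => a b /=; simpc.
by apply/eqP; rewrite eq_complex /= !expr2 eqxx /=; apply/eqP; ring.
Qed.

Lemma unitary_adj N (U : 'M[C]_N) : unitary U -> adj U *m U = 1%:M.
Proof. by move=> H; apply: mulmx1C. Qed.

Lemma unitary_n2 N (U : 'M[C]_N) v : unitary U -> n2 (U *m v) = n2 v.
Proof.
move=> HU; apply: (@complexI R); rewrite -!ip_self /ip adjmM.
by rewrite -(mulmxA (adj v)) (mulmxA (adj U)) unitary_adj // mul1mx.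
Qed.

Lemma n2D N (a b : 'cV[C]_N) : n2 (a + b) = n2 a + 2 * rip a b + n2 b.
Proof.
rewrite /n2 /rip mulr_sumr -!big_split /=; apply: eq_bigr => i _.
rewrite !mxE; case: (a i 0) => x y; case: (b i 0) => z w /=; ring.
Qed.

Lemma n2N N (a : 'cV[C]_N) : n2 (- a) = n2 a.
Proof.
rewrite /n2; apply: eq_bigr => i _; rewrite !mxE; case: (a i 0) => x y /=; ring.
Qed.

Lemma ripZ N (a b : 'cV[C]_N) t : rip a (t%:C *: b) = t * rip a b.
Proof.
rewrite /rip mulr_sumr; apply: eq_bigr => i _.
rewrite !mxE; case: (a i 0) => x y; case: (b i 0) => z w /=; ring.
Qed.

Lemma n2Z N (b : 'cV[C]_N) t : n2 (t%:C *: b) = t ^+ 2 * n2 b.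
Proof.
rewrite /n2 mulr_sumr; apply: eq_bigr => i _.
rewrite !mxE; case: (b i 0) => z w /=; ring.
Qed.

Lemma CS N (a b : 'cV[C]_N) : rip a b ^+ 2 <= n2 a * n2 b.
Proof.
set na := n2 a; set nb := n2 b; set r := rip a b.
have H t : 0 <= na + 2 * (t * r) + t ^+ 2 * nb.
  by rewrite /na /nb /r -ripZ -n2Z -n2D n2_ge0.
have ha : 0 <= na := n2_ge0 a. have hb : 0 <= nb := n2_ge0 b.
have [nb0|nbp] := eqVneq nb 0.
  have [r0|rn0] := eqVneq r 0; first by rewrite r0 expr0n /= mulr_ge0.
  have h := H (- (na + 1) / (2 * r)).
  rewrite nb0 mulr0 addr0 in h.
  have e : 2 * ((- (na + 1) / (2 * r)) * r) = - (na + 1) by field.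
  by exfalso; lra.
have nbp' : 0 < nb by rewrite lt_def nbp hb.
have := H (- r / nb).
have -> : na + 2 * (- r / nb * r) + (- r / nb) ^+ 2 * nb = na - r ^+ 2 / nb.
  by field.
rewrite subr_ge0 ler_pdivrMr //.
Qed.

Lemma nrm_ge0 N (v : 'cV[C]_N) : 0 <= nrm v.
Proof. exact: sqrtr_ge0. Qed.

Lemma nrm_sqr N (v : 'cV[C]_N) : nrm v ^+ 2 = n2 v.
Proof. by rewrite sqr_sqrtr // n2_ge0. Qed.

Lemma nrmD N (a b : 'cV[C]_N) : nrm (a + b) <= nrm a + nrm b.
Proof.
have h : rip a b <= nrm a * nrm b.
  apply: (le_trans (ler_norm _)).
  rewrite -sqrtr_sqr /nrm -sqrtrM ?n2_ge0 //.
  by rewrite ler_sqrt ?mulr_ge0 ?n2_ge0 // CS.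
have ha := nrm_ge0 a; have hb := nrm_ge0 b; have hab := nrm_ge0 (a + b).
rewrite -(@ler_pXn2r _ 2) ?qualifE /= ?addr_ge0 //.
rewrite sqrrD !nrm_sqr n2D mulr2n; lra.
Qed.

End B.

Section Q.
Variable R : realType.
Local Notation C := R[i].

Definition hid {n} (M : 'M[C]_n) := adj M = M /\ M *m M = M.

Lemma hid1 n : hid (1%:M : 'M[C]_n).
Proof. by split; rewrite ?adjm1 ?mul1mx. Qed.

Lemma hidC n (M : 'M[C]_n) : hid M -> hid (1%:M - M).
Proof.
case=> h1 h2; split; first by rewrite adjmB adjm1 h1.
by rewrite mulmxBl mulmxBr !mul1mx mulmxBr mulmx1 h2 subrr subr0.
Qed.

Lemma hidT m n (M : 'M[C]_m) : hid M -> hid (M *t (1%:M : 'M[C]_n)).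
Proof. by case=> h1 h2; split; rewrite ?adjmT ?adjm1 ?h1 // tensmx_mul h2 mulmx1. Qed.

Lemma delta_adj n (i : 'I_n) : adj (delta_mx i i : 'M[C]_n) = delta_mx i i.
Proof. by apply/matrixP => a b; rewrite !mxE rmorph_nat andbC. Qed.

Lemma hid_delta n (i : 'I_n) : hid (delta_mx i i : 'M[C]_n).
Proof. by split; rewrite ?delta_adj // mul_delta_mx. Qed.

Lemma hid_quad n (M : 'M[C]_n) v : hid M -> (adj v *m M *m v) 0 0 = (n2 (M *m v))%:C.
Proof. by case=> h1 h2; rewrite -ip_self /ip adjmM h1 !mulmxA -(mulmxA (adj v) M M) h2. Qed.

Lemma hid_n2 n (M : 'M[C]_n) v : hid M -> n2 (M *m v) <= n2 v.
Proof.
move=> hM.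
have Heq : (n2 v)%:C = (n2 (M *m v))%:C + (n2 ((1%:M - M) *m v))%:C.
  rewrite -ip_self -(hid_quad v hM) -(hid_quad v (hidC hM)) /ip.
  have -> : adj v *m v = adj v *m M *m v + adj v *m (1%:M - M) *m v.
    by rewrite -mulmxDl -mulmxDr addrC subrK mulmx1.
  by rewrite [LHS]mxE.
move: (congr1 (@complex.Re R) Heq); rewrite /= => ->.
have := n2_ge0 ((1%:M - M) *m v); lra.
Qed.

Lemma diff_bound D W (P : 'M[C]_2) (Dl : 'M[C]_D) (d2 : R) (v : 'cV[C]_(2 * D * W)) :
  hid P -> adj Dl *m Dl = d2%:C%:M -> 0 <= d2 ->
  n2 (((P *t Dl) *t (1%:M : 'M[C]_W)) *m v) <= d2 * n2 v.
Proof.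
move=> hP hD d2p.
set M := ((P *t (1%:M : 'M[C]_D)) *t (1%:M : 'M[C]_W)).
have hM : hid M by do 2 apply: hidT.
have Heq : (n2 (((P *t Dl) *t (1%:M : 'M[C]_W)) *m v))%:C = d2%:C * (n2 (M *m v))%:C.
  rewrite -ip_self -(hid_quad v hM) /ip adjmM !adjmT adjm1 mulmxA -(mulmxA (adj v) (_ *t _) (_ *t _)).
  rewrite !tensmx_mul mulmx1 hD.
  case: hP => h1 h2; rewrite h1 h2 (@tensmx_scalar_r _ _ _ D P (d2%:C)) tensmxZl -scalemxAr -scalemxAl.
  by rewrite mxE.
move: (congr1 (@complex.Re R) Heq); rewrite /= => ->.
rewrite mulr0 subr0; apply: ler_wpM2l => //; exact: hid_n2.
Qed.

Lemma P01 : (delta_mx ord0 ord0 : 'M[C]_2) + delta_mx ord_max ord_max = 1%:M.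
Proof.
apply/matrixP => i j; rewrite !mxE.
case: i => [[|[|i]] Hi] //; case: j => [[|[|j]] Hj] //= ; by rewrite ?addr0 ?add0r.
Qed.

Lemma query_unitary D W (O1 O2 : 'M[C]_D) q :
  unitary O1 -> unitary O2 -> unitary (query_op (W:=W) O1 O2 q).
Proof.
move=> h1 h2; case: q => [[w dg] ct] /=.
have hO0 : unitary (if w then O2 else O1) by case: w.
set O0 := if w then O2 else O1 in hO0 *.
have hO : (if dg then adj O0 else O0) *m adj (if dg then adj O0 else O0) = 1%:M.
  by case: dg => //; rewrite adjmK unitary_adj.
set O := if dg then adj O0 else O0 in hO *.
rewrite /unitary adjmT adjm1 tensmx_mul mulmx1 -[X in _ = X]tensmx11; congr (_ *t _).
case: ct.
  rewrite adjmD !adjmT adjm1 !delta_adj mulmxDl !mulmxDr !tensmx_mul.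
  rewrite !mul_delta_mx mul1mx hO !mul_delta_mx_0 // !tens0mx addr0 add0r.
  by rewrite -tensmxDl P01 tensmx11.
by rewrite adjmT adjm1 tensmx_mul mul1mx hO tensmx11.
Qed.

Lemma query_diff D W (O1 O2 O1' O2' : 'M[C]_D) (d2 : R) q (v : 'cV[C]_(2 * D * W)) :
  adj (O1 - O1') *m (O1 - O1') = d2%:C%:M -> (O1 - O1') *m adj (O1 - O1') = d2%:C%:M ->
  adj (O2 - O2') *m (O2 - O2') = d2%:C%:M -> (O2 - O2') *m adj (O2 - O2') = d2%:C%:M ->
  0 <= d2 ->
  n2 ((query_op O1 O2 q - query_op O1' O2' q) *m v) <= d2 * n2 v.
Proof.
move=> a1 b1 a2 b2 d2p; case: q => [[w dg] ct] /=.
have hD : adj ((if dg then adj (if w then O2 else O1) else (if w then O2 else O1)) -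
          (if dg then adj (if w then O2' else O1') else (if w then O2' else O1'))) *m
          ((if dg then adj (if w then O2 else O1) else (if w then O2 else O1)) -
          (if dg then adj (if w then O2' else O1') else (if w then O2' else O1')))
          = d2%:C%:M.
  case: dg; case: w => //; by rewrite -adjmB adjmK.
rewrite -tensmxBl.
case: ct.
  rewrite opprD addrACA subrr add0r -tensmxBr.
  by apply: diff_bound => //; exact: hid_delta.
by rewrite -tensmxBr; apply: diff_bound => //; exact: hid1.
Qed.

End Q.

Section Hy.
Variable R : realType.
Local Notation C := R[i].

Lemma n2_ket0 N : n2 (@ket0 R N) <= 1.
Proof.
rewrite /n2; case: N => [|N]; first by rewrite big_ord0 ler01.
rewrite big_ord_recl big1 ?addr0.
  by rewrite !mxE /= expr1n expr0n /= addr0.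
by move=> i _; rewrite !mxE /= expr0n /= addr0.
Qed.

Lemma nrm_unitary N (U : 'M[C]_N) v : unitary U -> nrm (U *m v) = nrm v.
Proof. by move=> h; rewrite /nrm unitary_n2. Qed.

Lemma n2_0 N : n2 (0 : 'cV[C]_N) = 0.
Proof. by rewrite /n2 big1 // => i _; rewrite mxE /= expr0n /= addr0. Qed.

Variables (D W T : nat) (U : nat -> 'M[C]_(2 * D * W)) (q : nat -> bool * bool * bool).

Lemma alg_n2 (O1 O2 : 'M[C]_D) :
  (forall k, (k <= T)%N -> unitary (U k)) -> unitary O1 -> unitary O2 ->
  forall k, (k <= T)%N -> n2 (alg_state U q O1 O2 k) <= 1.
Proof.
move=> hU h1 h2; elim=> [|k IH] hk /=.
  by rewrite unitary_n2; [exact: n2_ket0 | exact: hU].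
rewrite unitary_n2; last exact: hU.
rewrite unitary_n2; last exact: query_unitary.
by apply: IH; apply: ltnW.
Qed.

Lemma hybrid (O1 O2 O1' O2' : 'M[C]_D) (d2 : R) :
  (forall k, (k <= T)%N -> unitary (U k)) ->
  unitary O1 -> unitary O2 -> unitary O1' -> unitary O2' ->
  adj (O1 - O1') *m (O1 - O1') = d2%:C%:M -> (O1 - O1') *m adj (O1 - O1') = d2%:C%:M ->
  adj (O2 - O2') *m (O2 - O2') = d2%:C%:M -> (O2 - O2') *m adj (O2 - O2') = d2%:C%:M ->
  0 <= d2 ->
  forall k, (k <= T)%N ->
  nrm (alg_state U q O1 O2 k - alg_state U q O1' O2' k) <= k%:R * Num.sqrt d2.
Proof.
move=> hU u1 u2 u1' u2' a1 b1 a2 b2 d2p; elim=> [|k IH] hk /=.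
  by rewrite subrr /nrm n2_0 sqrtr0 mul0r.
rewrite -mulmxBr nrm_unitary; last exact: hU.
set psi := alg_state U q O1 O2 k; set phi := alg_state U q O1' O2' k.
have -> : query_op O1 O2 (q k) *m psi - query_op O1' O2' (q k) *m phi =
          query_op O1 O2 (q k) *m (psi - phi) + (query_op O1 O2 (q k) - query_op O1' O2' (q k)) *m phi.
  by rewrite mulmxBr mulmxBl addrA subrK.
apply: (le_trans (nrmD _ _)).
rewrite nrm_unitary; last exact: query_unitary.
have hk' : (k <= T)%N by apply: ltnW.
have e1 : nrm (psi - phi) <= k%:R * Num.sqrt d2 := IH hk'.
have e2 : nrm ((query_op O1 O2 (q k) - query_op O1' O2' (q k)) *m phi) <= Num.sqrt d2.
  rewrite /nrm ler_sqrt //.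
  apply: (le_trans (query_diff (d2:=d2) _ _ _ _ _ _ _)) => //.
  by rewrite ler_piMr // alg_n2.
rewrite -natr1 mulrDl mul1r; lra.
Qed.

End Hy.

Section S.
Variable R : realType.
Local Notation C := R[i].

Definition sq (z : C) : R := (complex.Re z) ^+ 2 + (complex.Im z) ^+ 2.

Lemma sq_ge0 z : 0 <= sq z.
Proof. by rewrite /sq addr_ge0 // sqr_ge0. Qed.

Lemma norm_sq z : `|z| ^+ 2 = (sq z)%:C.
Proof. by rewrite add_Re2_Im2. Qed.

Lemma normC_real (x : R) : `|x%:C| = `|x|%:C.
Proof. by rewrite normc_def /= expr0n /= addr0 sqrtr_sqr. Qed.

Lemma sepR N (a b e : 'I_N -> R) (P1 P2 : pred 'I_N) :
  (forall k, P1 k -> P2 k -> False) ->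
  (forall k, 0 <= b k) -> (forall k, 0 <= e k) ->
  (forall k, a k <= 3 * e k + 3 / 2 * b k) ->
  2 / 3 <= \sum_(k | P1 k) a k -> 2 / 3 <= \sum_(k | P2 k) b k ->
  \sum_k b k <= 1 -> 1 / 18 <= \sum_k e k.
Proof.
move=> dis hb he hab h1 h2 h3.
have s1 : \sum_(k | P1 k) a k <= 3 * \sum_(k | P1 k) e k + 3 / 2 * \sum_(k | P1 k) b k.
  rewrite !mulr_sumr -big_split /=; exact: ler_sum.
have s2 : \sum_(k | P1 k) e k <= \sum_k e k.
  rewrite [X in _ <= X](bigID P1) /= lerDl; exact: sumr_ge0.
have s3 : \sum_(k | P1 k) b k + \sum_(k | P2 k) b k <= \sum_k b k.
  rewrite !(big_mkcond P1) !(big_mkcond P2) -big_split /=; apply: ler_sum => k _.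
  case h1k : (P1 k); case h2k : (P2 k) => //=.
  - by exfalso; exact: (dis k).
  - by rewrite addr0.
  - by rewrite add0r.
  - by rewrite addr0.
have s4 : 0 <= \sum_(k | P1 k) b k by exact: sumr_ge0.
lra.
Qed.

Lemma sep N (psi phi : 'cV[C]_N) (est : 'I_N -> R) (f1 f2 eps : R) :
  2 * eps < `|f1 - f2| ->
  (2 / 3 : C) <= \sum_(k < N | `|(est k)%:C - f1%:C| <= eps%:C) `|psi k 0| ^+ 2 ->
  (2 / 3 : C) <= \sum_(k < N | `|(est k)%:C - f2%:C| <= eps%:C) `|phi k 0| ^+ 2 ->
  n2 phi <= 1 -> 1 / 18 <= n2 (psi - phi).
Proof.
move=> hf h1 h2 h3.
have e23 : (2 / 3 : C) = (2 / 3 : R)%:C.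
  by rewrite rmorphM fmorphV /= !rmorph_nat.
have cnd f k : (`|(est k)%:C - f%:C| <= eps%:C) = (`|est k - f| <= eps).
  by rewrite -rmorphB normC_real lecR.
move: h1 h2; rewrite e23.
under eq_bigl do rewrite cnd.
under eq_bigr do rewrite norm_sq.
rewrite -rmorph_sum lecR => h1.
under eq_bigl do rewrite cnd.
under eq_bigr do rewrite norm_sq.
rewrite -rmorph_sum lecR => h2.
apply: (sepR (a := fun k => sq (psi k 0)) (b := fun k => sq (phi k 0))
   (P1 := fun k => `|est k - f1| <= eps) (P2 := fun k => `|est k - f2| <= eps)) => //.
- move=> k k1 k2.
  have := ler_distD (est k) f1 f2; rewrite (distrC f1 (est k)); lra.
- by move=> k; exact: sq_ge0.
- by move=> k; rewrite sq_ge0.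
- move=> k; rewrite /sq !mxE /=; case: (psi k 0) => x y; case: (phi k 0) => z w /=.
  have := sqr_ge0 (x - 3 / 2 * z); have := sqr_ge0 (y - 3 / 2 * w); clear; nra.
Qed.

End S.

Section T.
Variable R : realType.
Local Notation C := R[i].
Local Notation i1 := (ord_max : 'I_2).
Local Notation i0 := (ord0 : 'I_2).

Lemma lift00 : lift ord0 (ord0 : 'I_1) = ord_max :> 'I_2.
Proof. by apply: val_inj. Qed.

Lemma det2 (A : 'M[C]_2) : \det A = A i0 i0 * A i1 i1 - A i0 i1 * A i1 i0.
Proof.
rewrite (expand_det_row _ ord0) !big_ord_recl big_ord0 /cofactor !det_mx11 !mxE /=.
have -> : lift ord0 (0 : 'I_1) = i1 by apply: val_inj.
have -> : lift ord_max (0 : 'I_1) = i0 :> 'I_2 by apply: val_inj.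
rewrite /= expr0 expr1 addr0; ring.
Qed.

Lemma tr2 (A : 'M[C]_2) : \tr A = A i0 i0 + A i1 i1.
Proof. by rewrite /mxtrace !big_ord_recl big_ord0 addr0 lift00. Qed.

Lemma mul2E (A B : 'M[C]_2) i j : (A *m B) i j = A i i0 * B i0 j + A i i1 * B i1 j.
Proof. by rewrite !mxE !big_ord_recl big_ord0 addr0 lift00. Qed.

Lemma quad2 (A : 'M[C]_2) (v : 'cV[C]_2) :
  (adj v *m A *m v) 0 0 = (v i0 0)^* * (A i0 i0 * v i0 0 + A i0 i1 * v i1 0)
                        + (v i1 0)^* * (A i1 i0 * v i0 0 + A i1 i1 * v i1 0).
Proof.
rewrite !mxE !big_ord_recl !big_ord0 !mxE !big_ord_recl !big_ord0 /= lift00 /adj !mxE.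
ring.
Qed.
End T.
Section T2.
Variable R : realType.
Local Notation C := R[i].
Local Notation i1 := (ord_max : 'I_2).
Local Notation i0 := (ord0 : 'I_2).

Definition col2 (v0 v1 : C) : 'cV[C]_2 := \col_i (if i == i0 then v0 else v1).

Lemma col2E0 v0 v1 : col2 v0 v1 i0 0 = v0. Proof. by rewrite !mxE. Qed.
Lemma col2E1 v0 v1 : col2 v0 v1 i1 0 = v1. Proof. by rewrite !mxE. Qed.

Lemma psd2_facts (A : 'M[C]_2) : psd A ->
  [/\ A i1 i0 = (A i0 i1)^*, 0 <= A i0 i0, 0 <= A i1 i1 & 0 <= \det A].
Proof.
move=> H.
have q v0 v1 : 0 <= (v0)^* * (A i0 i0 * v0 + A i0 i1 * v1)
                        + (v1)^* * (A i1 i0 * v0 + A i1 i1 * v1).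
  by have := H (col2 v0 v1); rewrite quad2 col2E0 col2E1.
move: q; rewrite det2.
case: (A i0 i0) => pr pi; case: (A i0 i1) => br bi; case: (A i1 i0) => cr ci;
case: (A i1 i1) => dr di => q.
have := q (Complex 1 0) (Complex 0 0); simpc; case/andP => /eqP e1 g1.
have := q (Complex 0 0) (Complex 1 0); simpc; case/andP => /eqP e2 g2.
have := q (Complex 1 0) (Complex 1 0); simpc; case/andP => /eqP e3 g3.
have := q (Complex 1 0) (Complex 0 1); simpc; case/andP => /eqP e4 g4.
have := q (Complex (- br) (- bi)) (Complex pr 0); simpc; case/andP => _ g5.
have := q (Complex dr 0) (Complex (- br) bi); simpc; case/andP => _ g6.
have := q (Complex 1 0) (Complex (- br) bi); simpc; case/andP => _ g7.
have hc : cr = br by lra.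
have hci : ci = - bi by lra.
subst pi di cr ci.
split.
- by [].
- by rewrite eqxx g1.
- by rewrite eqxx g2.
apply/andP; split; first by apply/eqP; ring.
set B := br * br + bi * bi.
have hB : 0 <= B by rewrite /B addr_ge0 // -expr2 sqr_ge0.
have g5' : 0 <= pr * (pr * dr - B) by rewrite /B; nra.
have g6' : 0 <= dr * (pr * dr - B) by rewrite /B; nra.
have g7' : 0 <= pr + dr * B - 2 * B by rewrite /B; nra.
have -> : pr * dr - 0 * 0 + (bi * - bi - br * br) = pr * dr - B by rewrite /B; ring.
case: (lerP 0 (pr * dr - B)) => // hX.
have hp : pr = 0 by nra.
have hd : dr = 0 by nra.
subst pr dr; nra.
Qed.
End T2.

Section F.
Variable R : realType.
Local Notation C := R[i].
Local Notation i1 := (ord_max : 'I_2).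
Local Notation i0 := (ord0 : 'I_2).

Lemma I2P (i : 'I_2) : i = i0 \/ i = i1.
Proof. by case: i => [[|[|k]] h] //; [left|right]; apply: val_inj. Qed.

Lemma ge0_conj (z : C) : 0 <= z -> z^* = z.
Proof. by case: z => a b; simpc; case/andP => /eqP -> _; rewrite oppr0. Qed.

Lemma psd2_adj (A : 'M[C]_2) : psd A -> adj A = A.
Proof.
case/psd2_facts => h10 h00 h11 _; apply/matrixP => i j; rewrite !mxE.
case: (I2P i) => ->; case: (I2P j) => ->;
  [exact: ge0_conj | by rewrite h10 conjcK | by rewrite h10 | exact: ge0_conj].
Qed.

Lemma CH2 (A : 'M[C]_2) : A *m A = \tr A *: A - (\det A)%:M.
Proof.
apply/matrixP => i j; rewrite mul2E !mxE tr2 det2.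
case: (I2P i) => ->; case: (I2P j) => -> /=; ring.
Qed.

Lemma trsq2 (A : 'M[C]_2) : \tr (A *m A) = \tr A ^+ 2 - 2 * \det A.
Proof. by rewrite !tr2 det2 !mul2E; ring. Qed.

Lemma psd_conjB n (B X : 'M[C]_n) : adj B = B -> psd X -> psd (B *m X *m B).
Proof.
move=> hB hX v.
have -> : adj v *m (B *m X *m B) *m v = adj (B *m v) *m X *m (B *m v).
  by rewrite adjmM hB !mulmxA.
exact: hX.
Qed.

Lemma quadZD n (X : 'M[C]_n) (a d : C) v :
  (adj v *m (a *: (X + d%:M)) *m v) 0 0 = a * ((adj v *m X *m v) 0 0 + d * (n2 v)%:C).
Proof.
rewrite -ip_self /ip -scalemxAr -scalemxAl mulmxDr mulmxDl mul_mx_scalar -scalemxAl.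
by rewrite !mxE.
Qed.

Lemma psdZD n (X : 'M[C]_n) (a d : C) : psd X -> 0 <= a -> 0 <= d -> psd (a *: (X + d%:M)).
Proof.
move=> hX ha hd v; rewrite quadZD mulr_ge0 // addr_ge0 // ?hX //.
by rewrite mulr_ge0 // ler0c n2_ge0.
Qed.

Lemma msqrt_tr2 (X : 'M[C]_2) (d t : C) : psd X -> 0 <= d -> 0 < t ->
  \det X = d ^+ 2 -> \tr X + 2 * d = t ^+ 2 -> \tr (msqrt X) = t.
Proof.
move=> hX hd ht hdet htr.
have tn0 : t != 0 by rewrite gt_eqF.
have ex : exists B : 'M[C]_2, psd B /\ B *m B = X.
  exists (t^-1 *: (X + d%:M)); split.
    by apply: psdZD => //; rewrite invr_ge0 ltW.
  rewrite -scalemxAl -scalemxAr scalerA mulmxDl !mulmxDr CH2 hdet.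
  rewrite mul_mx_scalar mul_scalar_mx -scalar_mxM.
  have -> : \tr X *: X - (d ^+ 2)%:M + d *: X + (d *: X + (d * d)%:M) = (\tr X + 2 * d) *: X.
    by apply/matrixP => i j; rewrite !mxE; case: (i == j); rewrite ?mulr1n ?mulr0n; ring.
  by rewrite htr scalerA -expr2 mulrC -exprMn mulfV // expr1n scale1r.
have /= [hY hYY] := xgetPex 0 ex.
rewrite /msqrt.
set Y := xget _ _ in hY hYY *.
case: (psd2_facts hY) => _ h00 h11 hdY.
have dY : \det Y = d.
  apply/eqP; rewrite -(eqrXn2 (n := 2)) //.
  by rewrite -hdet -hYY det_mulmx expr2.
have trY0 : 0 <= \tr Y by rewrite tr2 addr_ge0.
apply/eqP; rewrite -(eqrXn2 (n := 2) (isT : (0 < 2)%N) trY0 (ltW ht)).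
by rewrite -htr -hYY trsq2 dY subrK.
Qed.

Definition diag2 (x y : C) : 'M[C]_2 :=
  \matrix_(i, j) (if i == j then (if i == i0 then x else y) else 0).

Lemma psd_diag2 x y : 0 <= x -> 0 <= y -> psd (diag2 x y).
Proof.
move=> hx hy v; rewrite quad2 !mxE /= !mul0r !addr0 add0r.
by rewrite addr_ge0 // mulrCA mulr_ge0 // mulrC mulcJ_ge0.
Qed.

Lemma diag2M x y x' y' : diag2 x y *m diag2 x' y' = diag2 (x * x') (y * y').
Proof.
apply/matrixP => i j; rewrite mul2E !mxE.
by case: (I2P i) => ->; case: (I2P j) => -> /=; rewrite ?mul0r ?mulr0 ?addr0 ?add0r.
Qed.

Lemma det_diag2 x y : \det (diag2 x y) = x * y.
Proof. by rewrite det2 !mxE /= mulr0 subr0. Qed.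

Lemma tr_diag2 x y : \tr (diag2 x y) = x + y.
Proof. by rewrite tr2 !mxE. Qed.

Lemma fid_diag (a b x y : C) : 0 <= a -> 0 <= b -> 0 <= x -> 0 <= y -> 0 < a * x + b * y ->
  fidelity (diag2 (a ^+ 2) (b ^+ 2)) (diag2 (x ^+ 2) (y ^+ 2)) = a * x + b * y.
Proof.
move=> ha hb hx hy ht.
set rho := diag2 (a ^+ 2) (b ^+ 2); set sig := diag2 (x ^+ 2) (y ^+ 2).
have exB : exists B : 'M[C]_2, psd B /\ B *m B = sig.
  by exists (diag2 x y); split; [exact: psd_diag2 | rewrite diag2M -!expr2].
have [hB hBB] : psd (msqrt sig) /\ msqrt sig *m msqrt sig = sig := xgetPex 0 exB.
have hBa := psd2_adj hB.
set B := msqrt sig in hB hBB hBa *.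
have hrho : psd rho by apply: psd_diag2; rewrite exprn_ge0.
rewrite /fidelity -/B.
apply: (msqrt_tr2 (d := a * b * x * y)) => //.
- exact: psd_conjB.
- by rewrite !mulr_ge0.
- by rewrite !det_mulmx mulrC mulrA -det_mulmx hBB !det_diag2; ring.
- rewrite mxtrace_mulC mulmxA hBB diag2M tr_diag2; ring.
Qed.

End F.

Section O.
Variable R : realType.
Local Notation C := R[i].
Local Notation i1 := (ord_max : 'I_2).
Local Notation i0 := (ord0 : 'I_2).

Definition Rot (c s : R) : 'M[C]_2 :=
  \matrix_(i, j) (if i == j then c%:C else if i == i0 then (- s)%:C else s%:C).

Lemma rot_adj x y : adj (Rot x y) *m Rot x y = (x ^+ 2 + y ^+ 2)%:C%:M.
Proof.
apply/matrixP => i j; rewrite mul2E !mxE.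
case: (I2P i) => ->; case: (I2P j) => -> /=; rewrite ?conjc_real ?mulr1n ?mulr0n.
  all: rewrite /real_complex_def; simpc; apply/eqP; rewrite eq_complex /=;
    apply/andP; split; apply/eqP; ring.
Qed.

Lemma rot_adj' x y : Rot x y *m adj (Rot x y) = (x ^+ 2 + y ^+ 2)%:C%:M.
Proof.
apply/matrixP => i j; rewrite mul2E !mxE.
case: (I2P i) => ->; case: (I2P j) => -> /=; rewrite ?conjc_real ?mulr1n ?mulr0n.
  all: rewrite /real_complex_def; simpc; apply/eqP; rewrite eq_complex /=;
    apply/andP; split; apply/eqP; ring.
Qed.

Lemma rotB c s c' s' : Rot c s - Rot c' s' = Rot (c - c') (s - s').
Proof.
apply/matrixP => i j; rewrite !mxE.
by case: (i == j); case: (i == i0); rewrite -rmorphB // opprB opprK addrC.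
Qed.

Definition CN n (j0 j1 : 'I_n) : 'M[C]_(2 * n) :=
  delta_mx i0 i0 *t 1%:M + delta_mx i1 i1 *t tperm_mx j0 j1.

Definition Ofam n (j0 j1 : 'I_n) (c s : R) : 'M[C]_(2 * n) :=
  CN j0 j1 *m (Rot c s *t 1%:M).

Lemma adj_tperm n (j0 j1 : 'I_n) : adj (tperm_mx j0 j1 : 'M[C]_n) = tperm_mx j0 j1.
Proof. by rewrite /adj map_tperm_mx tr_tperm_mx. Qed.

Lemma tperm_sq n (j0 j1 : 'I_n) : (tperm_mx j0 j1 : 'M[C]_n) *m tperm_mx j0 j1 = 1%:M.
Proof. by rewrite /tperm_mx -perm_mxM tperm2 perm_mx1. Qed.

Lemma CN_unitary n (j0 j1 : 'I_n) : CN j0 j1 *m adj (CN j0 j1) = 1%:M.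
Proof.
rewrite /CN adjmD !adjmT adjm1 !delta_adj adj_tperm mulmxDl !mulmxDr !tensmx_mul.
rewrite !mul_delta_mx mul1mx tperm_sq !mul_delta_mx_0 // !tens0mx addr0 add0r.
by rewrite -tensmxDl P01 tensmx11.
Qed.

Lemma CN_unitary' n (j0 j1 : 'I_n) : adj (CN j0 j1) *m CN j0 j1 = 1%:M.
Proof. by apply: mulmx1C; apply: CN_unitary. Qed.

Lemma tens_scalar_l n (a : C) : (a%:M : 'M[C]_2) *t (1%:M : 'M[C]_n) = a%:M.
Proof. by rewrite -[a%:M]scalemx1 tensmxZl tensmx11 scalemx1. Qed.

Lemma Ofam_unitary n (j0 j1 : 'I_n) c s : c ^+ 2 + s ^+ 2 = 1 -> unitary (Ofam j0 j1 c s).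
Proof.
move=> h; rewrite /unitary /Ofam adjmM adjmT adjm1 mulmxA -(mulmxA (CN j0 j1)).
by rewrite tensmx_mul mulmx1 rot_adj' h tens_scalar_l mulmx1 CN_unitary.
Qed.

Lemma Ofam_diff n (j0 j1 : 'I_n) c s c' s' :
  let Dl := Ofam j0 j1 c s - Ofam j0 j1 c' s' in
  let d2 := (c - c') ^+ 2 + (s - s') ^+ 2 in
  adj Dl *m Dl = d2%:C%:M /\ Dl *m adj Dl = d2%:C%:M.
Proof.
move=> Dl d2.
have eD : Dl = CN j0 j1 *m (Rot (c - c') (s - s') *t 1%:M).
  by rewrite /Dl /Ofam -mulmxBr -tensmxBl rotB.
rewrite eD; split.
  rewrite adjmM adjmT adjm1 mulmxA -(mulmxA _ (adj (CN j0 j1))) CN_unitary' mulmx1.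
  by rewrite tensmx_mul mulmx1 rot_adj tens_scalar_l.
rewrite adjmM adjmT adjm1 mulmxA -(mulmxA (CN j0 j1)) tensmx_mul mulmx1 rot_adj'.
by rewrite tens_scalar_l mul_mx_scalar -scalemxAl CN_unitary scalemx1.
Qed.

End O.

Section P.
Variable R : realType.
Local Notation C := R[i].
Local Notation i1 := (ord_max : 'I_2).
Local Notation i0 := (ord0 : 'I_2).

Lemma tensE0 m k (u : 'cV[C]_m) (w : 'cV[C]_k) i l :
  (u *t w) (mxtens_index (i, l)) ord0 = u i 0 * w l 0.
Proof.
have -> : (ord0 : 'I_(1 * 1)) = mxtens_index (ord0 : 'I_1, ord0 : 'I_1) by apply: val_inj.
exact: tensmxE.
Qed.

Lemma tensmx_mulv m n p q (A : 'M[C]_(m, n)) (B : 'M[C]_(p, q)) (u : 'cV[C]_n) (w : 'cV[C]_q) :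
  (A *t B) *m (u *t w : 'cV_(n * q)) = ((A *m u) *t (B *m w) : 'cV_(m * p)).
Proof. exact: (tensmx_mul A B u w). Qed.

Lemma mul2E' m n (A : 'M[C]_(m, 2)) (B : 'M[C]_(2, n)) i j :
  (A *m B) i j = A i i0 * B i0 j + A i i1 * B i1 j.
Proof. by rewrite !mxE !big_ord_recl big_ord0 addr0 lift00. Qed.

Lemma mxDE m n (A B : 'M[C]_(m, n)) i j : (A + B) i j = A i j + B i j.
Proof. by rewrite mxE. Qed.

Lemma ipE n (u v : 'cV[C]_n) : ip u v = \sum_l (u l 0)^* * v l 0.
Proof. by rewrite /ip mxE; apply: eq_bigr => l _; rewrite !mxE. Qed.

Lemma ptrace_two m k (u1 u2 : 'cV[C]_m) (w1 w2 : 'cV[C]_k) i j :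
  ptrace_pure (u1 *t w1 + u2 *t w2) i j =
    u1 i 0 * (u1 j 0)^* * ip w1 w1 + u1 i 0 * (u2 j 0)^* * ip w2 w1
  + u2 i 0 * (u1 j 0)^* * ip w1 w2 + u2 i 0 * (u2 j 0)^* * ip w2 w2.
Proof.
rewrite /ptrace_pure mxE.
under eq_bigr do rewrite !mxDE !tensE0.
rewrite !ipE !mulr_sumr -!big_split /=; apply: eq_bigr => l _.
rewrite !rmorphD !rmorphM /=; ring.
Qed.

Lemma ket0_tens N : (0 < N)%N -> (@ket0 R (2 * N)) = (@ket0 R 2) *t (@ket0 R N).
Proof.
move=> hN; apply/matrixP => i j.
case: (mxtens_indexP i) => a b; rewrite [j]ord1 tensE0 !mxE /=.
rewrite -natrM mulnb; congr (_ %:R).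
by rewrite addn_eq0 muln_eq0 (gtn_eqF hN) orbF.
Qed.

Variables (N : nat) (j0 j1 : 'I_N).
Hypothesis hj0 : val j0 = 0%N.
Hypothesis hj01 : j0 != j1.

Lemma k0E (l : 'I_N) : (@ket0 R N) l 0 = (l == j0)%:R.
Proof.
rewrite !mxE; congr (_ %:R); by rewrite -hj0 val_eqE.
Qed.

Lemma w2E (l : 'I_N) : (tperm_mx j0 j1 *m @ket0 R N) l 0 = (l == j1)%:R.
Proof.
rewrite -xrowE /xrow /row_perm mxE k0E.
case: tpermP => [->|->|h1 h2].
- by rewrite eq_sym.
- by rewrite !eqxx.
have /negbTE -> : l != j0 by apply/eqP.
by have /negbTE -> : l != j1 by apply/eqP.
Qed.

Lemma ip_k0 : ip (@ket0 R N) (@ket0 R N) = 1.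
Proof.
rewrite ipE (bigD1 j0) //= big1 ?addr0.
  by rewrite k0E eqxx rmorph1 mulr1.
by move=> l hl; rewrite k0E (negbTE hl) rmorph0 mul0r.
Qed.

Lemma ip_w2 : ip (tperm_mx j0 j1 *m @ket0 R N) (tperm_mx j0 j1 *m @ket0 R N) = 1.
Proof.
rewrite ipE (bigD1 j1) //= big1 ?addr0.
  by rewrite w2E eqxx rmorph1 mulr1.
by move=> l hl; rewrite w2E (negbTE hl) rmorph0 mul0r.
Qed.

Lemma ip_k0w2 : ip (@ket0 R N) (tperm_mx j0 j1 *m @ket0 R N) = 0.
Proof.
rewrite ipE big1 // => l _; rewrite k0E w2E.
case: (eqVneq l j0) => [->|h]; first by rewrite (negbTE hj01) mulr0.
by rewrite rmorph0 mul0r.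
Qed.

Lemma ip_w2k0 : ip (tperm_mx j0 j1 *m @ket0 R N) (@ket0 R N) = 0.
Proof.
rewrite ipE big1 // => l _; rewrite k0E w2E.
case: (eqVneq l j0) => [->|h]; first by rewrite (negbTE hj01) rmorph0 mul0r.
by rewrite /= mulr0.
Qed.

Lemma prep_Ofam c s : (0 < N)%N ->
  ptrace_pure (Ofam j0 j1 c s *m @ket0 R (2 * N)) = diag2 (c ^+ 2)%:C (s ^+ 2)%:C.
Proof.
move=> hN.
rewrite ket0_tens // /Ofam -mulmxA tensmx_mulv mul1mx /CN mulmxDl !tensmx_mulv !mul1mx.
apply/matrixP => i j; rewrite ptrace_two ip_k0 ip_w2 ip_k0w2 ip_w2k0.
rewrite !mulr1 !mulr0 !addr0.
rewrite !mul2E' !mxE /=.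
case: (I2P i) => ->; case: (I2P j) => -> /=;
  rewrite ?mul1r ?mul0r ?mulr1 ?mulr0 ?addr0 ?add0r ?rmorph0 ?conjc_real ?mulr0 ?mul0r ?addr0 ?add0r //.
all: rewrite /real_complex_def; simpc; apply/eqP; rewrite eq_complex /=; apply/andP; split; apply/eqP; ring.
Qed.

End P.

Section Ar.
Variable R : realType.

Lemma arith1 (eps s0 s1 c0 c1 : R) : 0 < eps -> eps < 1 / 4 -> s0 = 1 / 8 -> s1 = 1 / 8 + 2 * eps ->
  c0 ^+ 2 = 1 - s0 ^+ 2 -> c1 ^+ 2 = 1 - s1 ^+ 2 -> 0 <= c0 -> 0 <= c1 ->
  2 * eps < `|2 * c0 * s0 - 2 * c1 * s1| /\ (c0 - c1) ^+ 2 + (s0 - s1) ^+ 2 <= 5 * eps ^+ 2.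
Proof.
move=> e0 e1 hs0 hs1 hc0 hc1 p0 p1.
have c0b : 3 / 4 <= c0.
  rewrite -(@ler_pXn2r _ 2) ?qualifE /= ?p0 //; last by lra.
  rewrite hc0 hs0; lra.
have c1b : 3 / 4 <= c1.
  rewrite -(@ler_pXn2r _ 2) ?qualifE /= ?p1 //; last by lra.
  rewrite hc1 hs1; nra.
have hd : (c0 - c1) * (c0 + c1) = 2 * eps * (1 / 4 + 2 * eps).
  have -> : (c0 - c1) * (c0 + c1) = c0 ^+ 2 - c1 ^+ 2 by ring.
  by rewrite hc0 hc1 hs0 hs1; field.
have hdc1 : 0 <= c0 - c1 by nra.
have hdc2 : c0 - c1 <= eps by nra.
have hh : 0 <= eps * (c1 - 3 / 4) by apply: mulr_ge0; lra.
have h : 2 * eps < 2 * c1 * s1 - 2 * c0 * s0 by rewrite hs1 hs0; nra.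
have hn := ler_norm (2 * c1 * s1 - 2 * c0 * s0).
rewrite distrC; split; first by lra.
rewrite hs0 hs1; nra.
Qed.

Lemma arith2 (eps T d2 : R) : 0 < eps -> 0 <= T -> 1 / 18 <= T ^+ 2 * d2 -> d2 <= 5 * eps ^+ 2 ->
  1 / 12 / eps <= T.
Proof.
move=> e0 T0 h1 h2.
rewrite ler_pdivrMr //.
case: (lerP (1 / 12) (T * eps)) => // h.
have h3 : T ^+ 2 * d2 <= T ^+ 2 * (5 * eps ^+ 2) by apply: ler_wpM2l; rewrite ?sqr_ge0.
have e : T ^+ 2 * (5 * eps ^+ 2) = 5 * ((T * eps) * (T * eps)) by ring.
have px : 0 <= T * eps by apply: mulr_ge0; lra.
have : (T * eps) * (T * eps) <= (1/12) * (T * eps) by apply: ler_wpM2r; lra.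
have : (1/12) * (T * eps) <= (1/12) * (1/12) by apply: ler_wpM2l; lra.
lra.
Qed.
End Ar.

Section M.
Variable R : realType.
Local Notation C := R[i].

Lemma diag2_sub (x y k : C) : diag2 x y - k%:M = diag2 (x - k) (y - k).
Proof.
apply/matrixP => i j; rewrite !mxE.
by case: (I2P i) => ->; case: (I2P j) => -> /=; rewrite ?subr0 ?mulr1n ?mulr0n ?subr0.
Qed.

Lemma adm_Ofam (a : nat) (j0 j1 : 'I_(2 ^ a)) (c s : R) :
  (0 < 2 ^ a)%N -> val j0 = 0%N -> j0 != j1 ->
  c ^+ 2 + s ^+ 2 = 1 -> 1 / 64 <= c ^+ 2 -> 1 / 64 <= s ^+ 2 ->
  admissible (n := 1) (a := a) (64 : R) (Ofam j0 j1 c s).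
Proof.
move=> hN hj0 hj01 h1 hc hs; split; first exact: Ofam_unitary.
rewrite /loewner_le /prepared_state prep_Ofam // diag2_sub.
apply: psd_diag2; rewrite -rmorphB ler0c subr_ge0; lra.
Qed.

End M.

Theorem mainTheorem10 (R : realType) :
  exists kappa0 : R, exists c : R, 1 <= kappa0 /\ 0 < c /\
  forall eps : R, 0 < eps < 1 / 4 ->
  forall (a : nat), (0 < a)%N ->
  forall (W T : nat) (U : nat -> 'M[R[i]]_(2 * (2 ^ 1 * 2 ^ a) * W))
         (q : nat -> bool * bool * bool)
         (est : 'I_(2 * (2 ^ 1 * 2 ^ a) * W) -> R),
  (forall k, (k <= T)%N -> unitary (U k)) ->
  (forall Orho Osig : 'M[R[i]]_(2 ^ 1 * 2 ^ a),
      admissible kappa0 Orho -> admissible kappa0 Osig ->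
      2 / 3 <= success_prob T U q est Orho Osig
                 (fidelity (prepared_state Orho) (prepared_state Osig)) eps) ->
  c / eps <= T%:R.
Proof.
exists 64, (1 / 12); split; first by lra.
split; first by lra.
move=> eps /andP[e0 e1] a ha W T U q est hU hsucc.
have hN : (0 < 2 ^ a)%N by rewrite expn_gt0.
have hN1 : (1 < 2 ^ a)%N by rewrite -{1}(expn0 2) ltn_exp2l.
pose j0 : 'I_(2 ^ a) := Ordinal hN.
pose j1 : 'I_(2 ^ a) := Ordinal hN1.
have hj0 : val j0 = 0%N by [].
have hj01 : j0 != j1 by [].
pose s0 : R := 1 / 8.
pose s1 : R := 1 / 8 + 2 * eps.
pose c0 := Num.sqrt (1 - s0 ^+ 2).
pose c1 := Num.sqrt (1 - s1 ^+ 2).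
have hc0 : c0 ^+ 2 = 1 - s0 ^+ 2 by rewrite sqr_sqrtr // /s0; lra.
have hc1 : c1 ^+ 2 = 1 - s1 ^+ 2 by rewrite sqr_sqrtr // /s1; nra.
have p0 : 0 <= c0 := sqrtr_ge0 _.
have p1 : 0 <= c1 := sqrtr_ge0 _.
have [hf hd] := arith1 e0 e1 (erefl s0) (erefl s1) hc0 hc1 p0 p1.
have hu0 : c0 ^+ 2 + s0 ^+ 2 = 1 by rewrite hc0; ring.
have hu1 : c1 ^+ 2 + s1 ^+ 2 = 1 by rewrite hc1; ring.
have hu0' : s0 ^+ 2 + c0 ^+ 2 = 1 by rewrite addrC.
have hu1' : s1 ^+ 2 + c1 ^+ 2 = 1 by rewrite addrC.
have bs0 : 1 / 64 <= s0 ^+ 2 by rewrite /s0; lra.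
have bc0 : 1 / 64 <= c0 ^+ 2 by rewrite hc0 /s0; lra.
have bs1 : 1 / 64 <= s1 ^+ 2 by rewrite /s1; nra.
have bc1 : 1 / 64 <= c1 ^+ 2 by rewrite hc1 /s1; nra.
pose A : 'M[R[i]]_(2 ^ 1 * 2 ^ a) := Ofam j0 j1 c0 s0.
pose B : 'M[R[i]]_(2 ^ 1 * 2 ^ a) := Ofam j0 j1 s0 c0.
pose A' : 'M[R[i]]_(2 ^ 1 * 2 ^ a) := Ofam j0 j1 c1 s1.
pose B' : 'M[R[i]]_(2 ^ 1 * 2 ^ a) := Ofam j0 j1 s1 c1.
have aA : admissible 64 A by apply: adm_Ofam.
have aB : admissible 64 B by apply: adm_Ofam.
have aA' : admissible 64 A' by apply: adm_Ofam.
have aB' : admissible 64 B' by apply: adm_Ofam.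
have fid (x y : R) : 0 <= x -> 0 <= y -> 0 < x * y ->
    fidelity (prepared_state (Ofam j0 j1 x y : 'M[R[i]]_(2 ^ 1 * 2 ^ a)))
             (prepared_state (Ofam j0 j1 y x : 'M[R[i]]_(2 ^ 1 * 2 ^ a))) = (2 * x * y)%:C.
  move=> hx hy hxy.
  rewrite /prepared_state !prep_Ofam // !rmorphXn fid_diag ?ler0c //.
    rewrite -!rmorphM -rmorphD; congr (_ %:C); ring.
  by rewrite -!rmorphM -rmorphD ltcR; lra.
have c0p : 0 < c0 * s0 by rewrite /s0; nra.
have c1p : 0 < c1 * s1 by rewrite /s1; nra.
have hs := hsucc A B aA aB.
have s0p : 0 <= s0 by rewrite /s0; lra.
have s1p : 0 <= s1 by rewrite /s1; lra.
rewrite (fid c0 s0 p0 s0p c0p) in hs.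
have hs' := hsucc A' B' aA' aB'.
rewrite (fid c1 s1 p1 s1p c1p) in hs'.
rewrite /success_prob in hs hs'.
case: aA => uA _; case: aB => uB _; case: aA' => uA' _; case: aB' => uB' _.
have n2phi : n2 (alg_state U q A' B' T) <= 1 := alg_n2 q hU uA' uB' (leqnn T).
have sp := sep hf hs hs' n2phi.
case: (Ofam_diff j0 j1 c0 s0 c1 s1) => /= dA dA'.
case: (Ofam_diff j0 j1 s0 c0 s1 c1) => /=; rewrite [(s0 - s1) ^+ 2 + _]addrC => dB dB'.
have d2p : 0 <= (c0 - c1) ^+ 2 + (s0 - s1) ^+ 2 by rewrite addr_ge0 // sqr_ge0.
have hy := hybrid q hU uA uB uA' uB' dA dA' dB dB' d2p (leqnn T).
set d2 := (c0 - c1) ^+ 2 + (s0 - s1) ^+ 2 in hy hd d2p.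
set v := alg_state U q A B T - alg_state U q A' B' T in hy sp.
have hT : 0 <= (T%:R : R) by rewrite ler0n.
have h2 : n2 v <= T%:R ^+ 2 * d2.
  rewrite -nrm_sqr -[d2]sqr_sqrtr // -exprMn.
  by rewrite ler_pXn2r ?qualifE /= ?nrm_ge0 ?mulr_ge0 ?sqrtr_ge0.
apply: (arith2 e0 hT _ hd).
exact: (le_trans sp h2).
Qed.
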